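(* Let $\mu$ be a probability measure on $\{0,1\}^{\mathbb{N}}$ with negatively correlated coordinates, i.e. $X\sim\mu$ satisfies $\mathbb{E}[X_iX_j]\le \mathbb{E}[X_i]\mathbb{E}[X_j]$ for all $i\neq j$ in $\mathbb{N}$, and let $\tilde\mu$ be its product version. Then $$\Delta_n(\mu)\ \ge\ \tfrac14\,\Delta_n(\tilde\mu)\qquad\text{for all } n\ge 1.$$
   Context: For a probability measure $\mu$ on $\{0,1\}^{\mathbb{N}}$ and $n\ge1$, let $X^{(1)},\dots,X^{(n)}$ be i.i.d. samples from $\mu$ and define $\Delta_n(\mu):=\mathbb{E}\sup_{j\in\mathbb{N}}\left|\frac1n\sum_{i=1}^n X^{(i)}_j-\mathbb{E}_{X\sim\mu}[X_j]\right|$. The product version $\tilde\mu$ of $\mu$ is the product measure on $\{0,1\}^{\mathbb{N}}$ whose one-dimensional marginals agree with those of $\mu$ (i.e. the coordinates are independent with the same marginal laws as under $\mu$). *)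

(* Defs.v *)
From HB Require Import structures.
From mathcomp Require Import all_boot all_order all_algebra.
From mathcomp Require Import all_classical all_reals all_analysis.
Set Implicit Arguments. Unset Strict Implicit. Unset Printing Implicit Defensive.
Import Order.TTheory GRing.Theory Num.Theory.
Local Open Scope classical_set_scope.
Local Open Scope ring_scope.

(* Cylinder sets of {0,1}^N : preimages of (arbitrary) subsets of bool under a
   coordinate projection; they generate the product sigma-algebra. *)
Definition cyl : set (set (nat -> bool)) :=
  [set A | exists (j : nat) (B : set bool), A = (fun x : nat -> bool => x j) @^-1` B].

Definition cube := g_sigma_algebraType cyl.

Definition coord_mean (R : realType) (mu : probability cube R) (j : nat) : \bar R :=
  (\int[mu]_(x in setT) ((x j)%:R : R)%:E)%E.

Definition neg_correlated (R : realType) (mu : probability cube R) : Prop :=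
  forall i j : nat, i <> j ->
    (\int[mu]_(x in setT) (((x i)%:R * (x j)%:R : R))%:E
       <= coord_mean mu i * coord_mean mu j)%E.

Definition indep_coords (R : realType) (nu : probability cube R) : Prop :=
  forall (F : seq nat) (B : nat -> set bool), uniq F ->
    nu [set x : cube | forall j, j \in F -> B j (x j)] =
    (\prod_(j <- F) nu [set x : cube | B j (x j)])%E.

Definition product_version (R : realType) (mu nu : probability cube R) : Prop :=
  indep_coords nu /\
  forall (j : nat) (B : set bool),
    nu [set x : cube | B (x j)] = mu [set x : cube | B (x j)].

Definition iid_sample (R : realType) (d : measure_display) (Omega : measurableType d)
  (P : probability Omega R) (mu : probability cube R) (n : nat)
  (X : 'I_n -> Omega -> cube) : Prop :=
  (forall i, measurable_fun setT (X i)) /\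
  (forall i (A : set cube), measurable A -> P (X i @^-1` A) = mu A) /\
  (forall B : 'I_n -> set cube, (forall i, measurable (B i)) ->
     P (\bigcap_(i in [set: 'I_n]) (X i @^-1` B i)) =
     (\prod_(i < n) P (X i @^-1` B i))%E).

Definition max_dev (R : realType) (mu : probability cube R) (n : nat)
  (x : 'I_n -> cube) : \bar R :=
  ereal_sup (range (fun j : nat =>
    `| ((n%:R^-1 * \sum_(i < n) ((x i j)%:R : R))%:E - coord_mean mu j)%E |%E)).

Definition Delta (R : realType) (d : measure_display) (Omega : measurableType d)
  (P : probability Omega R) (mu : probability cube R) (n : nat)
  (X : 'I_n -> Omega -> cube) : \bar R :=
  (\int[P]_(w in setT) max_dev mu (fun i => X i w))%E.

(* Main.v *)
Require Import Defs.
From HB Require Import structures.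
From mathcomp Require Import all_boot all_order all_algebra.
From mathcomp Require Import all_classical all_reals all_analysis.
From mathcomp Require Import measurable_realfun ring lra.
Import Order.TTheory GRing.Theory Num.Theory.
Local Open Scope classical_set_scope.
Local Open Scope ring_scope.

Set Implicit Arguments. Unset Strict Implicit. Unset Printing Implicit Defensive.

Section Comb.
Context (R : realFieldType).

Definition fcons (T : Type) n (t : T) (b : {ffun 'I_n -> T}) : {ffun 'I_n.+1 -> T} :=
  [ffun k => if unlift ord0 k is Some k' then b k' else t].

Lemma fcons0 (T : Type) n (t : T) (b : {ffun 'I_n -> T}) : fcons t b ord0 = t.
Proof. by rewrite ffunE unlift_none. Qed.

Lemma fconsS (T : Type) n (t : T) (b : {ffun 'I_n -> T}) i :
  fcons t b (lift ord0 i) = b i.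
Proof. by rewrite ffunE liftK. Qed.

Lemma sum_ffunS (T : finType) n (G : {ffun 'I_n.+1 -> T} -> R) :
  \sum_b G b = \sum_t \sum_(b : {ffun 'I_n -> T}) G (fcons t b).
Proof.
rewrite pair_bigA /=.
rewrite (reindex (fun p : T * {ffun 'I_n -> T} => fcons p.1 p.2)) //=.
exists (fun b : {ffun 'I_n.+1 -> T} => (b ord0, [ffun i => b (lift ord0 i)])).
  move=> [t b] _ /=; rewrite fcons0; congr pair; apply/ffunP => i.
  by rewrite ffunE fconsS.
move=> b _ /=; apply/ffunP => k; rewrite ffunE.
by case: (unliftP ord0 k) => [k'|] ->; rewrite ?ffunE.
Qed.

Definition W (T : finType) (q : T -> R) n (b : {ffun 'I_n -> T}) :=
  \prod_(k < n) q (b k).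

Lemma W_fcons (T : finType) (q : T -> R) n t (b : {ffun 'I_n -> T}) :
  W q (fcons t b) = q t * W q b.
Proof.
by rewrite /W big_ord_recl fcons0; congr (_ * _); apply: eq_bigr => i _; rewrite fconsS.
Qed.

Lemma W_ge0 (T : finType) (q : T -> R) n (b : {ffun 'I_n -> T}) :
  (forall t, 0 <= q t) -> 0 <= W q b.
Proof. by move=> q0; apply: prodr_ge0 => k _. Qed.

Lemma cnt_fcons (T : Type) (g : T -> nat) n t (b : {ffun 'I_n -> T}) :
  (\sum_(k < n.+1) g (fcons t b k) = g t + \sum_(k < n) g (b k))%N.
Proof.
by rewrite big_ord_recl fcons0; congr (_ + _)%N; apply: eq_bigr => i _; rewrite fconsS.
Qed.

Lemma sum_ffun0 (T : finType) (G : {ffun 'I_0 -> T} -> R) (c : R) :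
  (forall b, G b = c) -> \sum_b G b = c.
Proof.
move=> H; rewrite (eq_bigr (fun _ => c)) // sumr_const card_ffun card_ord expn0.
by rewrite mulr1n.
Qed.

Lemma sum_pair (H : bool * bool -> R) :
  \sum_t H t = H (true,true) + H (true,false) + (H (false,true) + H (false,false)).
Proof.
have := pair_bigA +%R (fun u v => H (u,v)) => /= E.
rewrite (eq_bigr (fun p => H (p.1, p.2))); last by case.
by rewrite -[LHS]E !big_bool.
Qed.

Lemma cnt_fcons1 n (t : bool * bool) (b : {ffun 'I_n -> bool * bool}) :
  (\sum_(k < n.+1) ((fcons t b k).1 : nat) = t.1 + \sum_(k < n) ((b k).1 : nat))%N.
Proof. exact: (cnt_fcons (fun x : bool * bool => (x.1 : nat))). Qed.

Lemma cnt_fcons2 n (t : bool * bool) (b : {ffun 'I_n -> bool * bool}) :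
  (\sum_(k < n.+1) ((fcons t b k).2 : nat) = t.2 + \sum_(k < n) ((b k).2 : nat))%N.
Proof. exact: (cnt_fcons (fun x : bool * bool => (x.2 : nat))). Qed.

Lemma cov22 (q : bool * bool -> R) (q0 : forall t, 0 <= q t) (q1 : \sum_t q t = 1)
  (qc : q (true,true) <= (q (true,false) + q (true,true)) * (q (false,true) + q (true,true)))
  (F G : bool -> R) : F false <= F true -> G false <= G true ->
  \sum_t q t * (F t.1 * G t.2) <= (\sum_t q t * F t.1) * (\sum_t q t * G t.2).
Proof.
move=> hF hG.
move: q1; rewrite !sum_pair /= => q1.
have ha : q (false,false) = 1 - q (false,true) - q (true,false) - q (true,true) by lra.
rewrite -subr_ge0.
move: ha (q0 (true,true)).
set A := q (true,true); set Bq := q (true,false); set C := q (false,true).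
set D := q (false,false) => ha _.
have key : 0 <= (F true - F false) * (G true - G false) * ((Bq + A) * (C + A) - A).
  apply: mulr_ge0; first by apply: mulr_ge0; rewrite subr_ge0.
  by rewrite subr_ge0.
apply: (le_trans key); rewrite le_eqVlt; apply/orP; left; apply/eqP.
rewrite ha; ring.
Qed.

Lemma NA (q : bool * bool -> R) (q0 : forall t, 0 <= q t) (q1 : \sum_t q t = 1)
  (qc : q (true,true) <= (q (true,false) + q (true,true)) * (q (false,true) + q (true,true)))
  n : forall (phi psi : nat -> R),
  {homo phi : a b / (a <= b)%N >-> a <= b} ->
  {homo psi : a b / (a <= b)%N >-> a <= b} ->
  \sum_(b : {ffun 'I_n -> bool * bool})
     W q b * (phi (\sum_(k < n) ((b k).1 : nat))%N * psi (\sum_(k < n) ((b k).2 : nat))%N)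
  <= (\sum_(b : {ffun 'I_n -> bool * bool}) W q b * phi (\sum_(k < n) ((b k).1 : nat))%N) *
     (\sum_(b : {ffun 'I_n -> bool * bool}) W q b * psi (\sum_(k < n) ((b k).2 : nat))%N).
Proof.
elim: n => [|n IH] phi psi hphi hpsi.
  rewrite (@sum_ffun0 _ _ (phi 0%N * psi 0%N)); last first.
    by move=> b; rewrite /W !big_ord0 mul1r.
  rewrite (@sum_ffun0 _ _ (phi 0%N)); last by move=> b; rewrite /W !big_ord0 mul1r.
  rewrite (@sum_ffun0 _ _ (psi 0%N)); last by move=> b; rewrite /W !big_ord0 mul1r.
  by [].
rewrite !sum_ffunS.
under eq_bigr => t _ do under eq_bigr => b _ do rewrite W_fcons ?cnt_fcons1 ?cnt_fcons2 -mulrA.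
under [X in _ <= X * _]eq_bigr => t _ do under eq_bigr => b _ do rewrite W_fcons ?cnt_fcons1 ?cnt_fcons2 -mulrA.
under [X in _ <= _ * X]eq_bigr => t _ do under eq_bigr => b _ do rewrite W_fcons ?cnt_fcons1 ?cnt_fcons2 -mulrA.
under eq_bigr => t _ do rewrite -mulr_sumr.
under [X in _ <= X * _]eq_bigr => t _ do rewrite -mulr_sumr.
under [X in _ <= _ * X]eq_bigr => t _ do rewrite -mulr_sumr.
set Phi := fun u : bool => \sum_(b : {ffun 'I_n -> bool * bool})
   W q b * phi (u + \sum_(k < n) ((b k).1 : nat))%N.
set Psi := fun u : bool => \sum_(b : {ffun 'I_n -> bool * bool})
   W q b * psi (u + \sum_(k < n) ((b k).2 : nat))%N.
apply: (@le_trans _ _ (\sum_t q t * (Phi t.1 * Psi t.2))).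
  apply: ler_sum => t _; apply: ler_wpM2l => //.
  apply: (IH (fun a => phi (t.1 + a)%N) (fun a => psi (t.2 + a)%N)).
    by move=> a b ab; apply: hphi; rewrite leq_add2l.
  by move=> a b ab; apply: hpsi; rewrite leq_add2l.
apply: (cov22 q0 q1 qc).
  apply: ler_sum => b _; apply: ler_wpM2l; first exact: W_ge0.
  by apply: hphi; rewrite leq_add2r.
apply: ler_sum => b _; apply: ler_wpM2l; first exact: W_ge0.
by apply: hpsi; rewrite leq_add2r.
Qed.


Lemma sum_cond_ind (B : finType) (P : pred B) (w : B -> R) :
  \sum_(b | P b) w b = \sum_b w b * (P b)%:R.
Proof.
rewrite big_mkcond /=; apply: eq_bigr => b _.
by case: (P b); rewrite ?mulr1 ?mulr0.
Qed.

Lemma CE (B : finType) (w : B -> R) (w0 : forall b, 0 <= w b) J (A : 'I_J -> pred B)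
  (hp : forall i j, i != j ->
     \sum_b w b * ((A i b)%:R * (A j b)%:R) <=
     (\sum_b w b * (A i b)%:R) * (\sum_b w b * (A j b)%:R)) :
  (\sum_j \sum_b w b * (A j b)%:R) / (1 + \sum_j \sum_b w b * (A j b)%:R)
  <= \sum_b w b * ([exists j, A j b])%:R.
Proof.
set a := fun j => \sum_b w b * (A j b)%:R.
have a0 j : 0 <= a j by apply: sumr_ge0 => b _; apply: mulr_ge0.
set s := \sum_j a j.
have s0 : 0 <= s by apply: sumr_ge0.
set Z := fun b => \sum_j ((A j b)%:R : R).
set l := (1 + s)^-1.
have l0 : 0 <= l by rewrite invr_ge0; lra.
have pw b : 2 * l * Z b - l ^+ 2 * (Z b) ^+ 2 <= ([exists j, A j b])%:R.
  case: (boolP [exists j, A j b]) => h.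
    have := sqr_ge0 (1 - l * Z b); rewrite /= -[1%:R]/(1 : R). nra.
  have -> : Z b = 0.
    by rewrite /Z big1 // => j _; move/existsPn: h => /(_ j) /negbTE ->.
  by rewrite /= mulr0 expr0n /= mulr0 subr0.
have SZ : \sum_b w b * Z b = s.
  rewrite /s /a exchange_big /=; apply: eq_bigr => b _.
  by rewrite /Z mulr_sumr.
have SZ2 : \sum_b w b * (Z b) ^+ 2 <= s + s * s.
  have -> : \sum_b w b * (Z b) ^+ 2 =
      \sum_i \sum_j \sum_b w b * ((A i b)%:R * (A j b)%:R).
    under [RHS]eq_bigr => i _ do rewrite exchange_big.
    rewrite [RHS]exchange_big /=; apply: eq_bigr => b _.
    rewrite /Z expr2 mulr_suml mulr_sumr; apply: eq_bigr => i _.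
    rewrite mulr_sumr mulr_sumr; apply: eq_bigr => j _.
    by rewrite mulrA.
  rewrite mulr_sumr -big_split /=; apply: ler_sum => i _.
  rewrite (bigD1 i) //=.
  have -> : \sum_b w b * ((A i b)%:R * (A i b)%:R) = a i.
    by apply: eq_bigr => b _; case: (A i b); rewrite ?mulr1 ?mulr0.
  rewrite lerD2l.
  apply: (@le_trans _ _ (\sum_(j | j != i) a i * a j)).
    by apply: ler_sum => j ji; apply: hp; rewrite eq_sym.
  rewrite -mulr_sumr mulrC; apply: ler_wpM2r => //.
  by rewrite /s [X in _ <= X](bigD1 i) //= lerDr // a0.
have key : 2 * l * s - l ^+ 2 * (s + s * s) <= \sum_b w b * ([exists j, A j b])%:R.
  apply: (@le_trans _ _ (\sum_b w b * (2 * l * Z b - l ^+ 2 * (Z b) ^+ 2))); last first.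
    by apply: ler_sum => b _; apply: ler_wpM2l.
  under eq_bigr => b _ do rewrite mulrBr.
  rewrite sumrB.
  under eq_bigr => b _ do rewrite mulrCA.
  rewrite -mulr_sumr SZ.
  under eq_bigr => b _ do rewrite mulrCA.
  by rewrite -mulr_sumr lerD2l lerN2 ler_wpM2l //; apply: exprn_ge0.
apply: le_trans _ key; rewrite le_eqVlt; apply/orP; left; apply/eqP.
rewrite /l; field.
lra.
Qed.

Lemma union_bound (B : finType) (w : B -> R) (w0 : forall b, 0 <= w b) J
  (A D : 'I_J -> pred B) :
  \sum_b w b * ([exists j, A j b || D j b])%:R <=
  \sum_j (\sum_b w b * (A j b)%:R + \sum_b w b * (D j b)%:R).
Proof.
have pw b : w b * ([exists j, A j b || D j b])%:R <=
    \sum_j (w b * (A j b)%:R + w b * (D j b)%:R).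
  case: (boolP [exists j, A j b || D j b]) => [/existsP [j hj]|_]; last first.
    by rewrite mulr0; apply: sumr_ge0 => j _; apply: addr_ge0; apply: mulr_ge0.
  rewrite (bigD1 j) //=.
  have r0 : 0 <= \sum_(i | i != j) (w b * (A i b)%:R + w b * (D i b)%:R).
    by apply: sumr_ge0 => i _; apply: addr_ge0; apply: mulr_ge0.
  have := w0 b.
  by move: hj; case: (A j b); case: (D j b) => //= _; rewrite ?mulr1 ?mulr0; lra.
apply: (le_trans (ler_sum _ (fun b _ => pw b))); rewrite exchange_big /=.
by apply: ler_sum => j _; rewrite big_split.
Qed.

Lemma final_alg (x y sp sm : R) : 0 <= sp -> 0 <= sm -> x <= 1 -> x <= sp + sm ->
  sp / (1 + sp) <= y -> sm / (1 + sm) <= y -> x <= 4 * y.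
Proof.
move=> sp0 sm0 x1 xs hp hm.
have hp' : sp <= y * (1 + sp) by rewrite -ler_pdivrMr; lra.
have hm' : sm <= y * (1 + sm) by rewrite -ler_pdivrMr; lra.
have y0 : 0 <= y by apply: le_trans hp; apply: divr_ge0; lra.
wlog : sp sm sp0 sm0 xs hp hm hp' hm' / sm <= sp.
  move=> H; case: (lerP sm sp) => h; first exact: (H sp sm).
  apply: (H sm sp) => //; [lra | exact: ltW].
move=> smp.
case: (lerP sp 1) => h1; nra.
Qed.

End Comb.

Lemma mem_bigsetU_seq (I : eqType) (T : Type) (s : seq I) (Pr : pred I) (F : I -> set T) w :
  (\big[setU/set0]_(i <- s | Pr i) F i) w <-> exists i, i \in s /\ Pr i /\ F i w.
Proof.
elim: s => [|x s IH]; first by rewrite big_nil; split => // -[i []].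
rewrite big_cons; case: ifP => hx.
  split.
    case=> [h|/IH [i [hi [pi fi]]]]; first by exists x; rewrite mem_head.
    by exists i; rewrite in_cons hi orbT.
  case=> i [+ [pi fi]]; rewrite in_cons => /orP [/eqP <-|hi]; first by left.
  by right; apply/IH; exists i.
rewrite IH; split; case=> i [hi [pi fi]]; exists i; split => //; first by rewrite in_cons hi orbT.
move: hi; rewrite in_cons => /orP [/eqP ei|//].
by rewrite ei hx in pi.
Qed.

Lemma measure_bigsetU_seq d (T : measurableType d) (R : realType)
  (mu : {measure set T -> \bar R}) (I : eqType) (s : seq I) (Pr : pred I) (F : I -> set T) :
  uniq s -> (forall i, measurable (F i)) ->
  (forall i j, i != j -> F i `&` F j = set0) ->
  mu (\big[setU/set0]_(i <- s | Pr i) F i) = (\sum_(i <- s | Pr i) mu (F i))%E.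
Proof.
move=> us mF dF; elim: s us => [|x s IH] /=; first by rewrite !big_nil measure0.
move=> /andP [xs us]; rewrite !big_cons; case: ifP => px; last exact: IH.
rewrite measureU //; first by congr (_ + _)%E; exact: IH.
  by apply: bigsetU_measurable => i _.
apply/seteqP; split => // w [fx /mem_bigsetU_seq [i [hi [pi fi]]]].
have xi : x != i by apply: contraNneq xs => ->.
by rewrite -(dF _ _ xi); split.
Qed.

Lemma iid_pre (R : realType) (d : measure_display) (Omega : measurableType d)
  (P : probability Omega R) (mu : probability cube R) (n : nat)
  (X : 'I_n -> Omega -> cube) (hX : iid_sample P mu X) k (A : set cube) :
  measurable A -> measurable (X k @^-1` A).
Proof. by move=> mA; have := hX.1 k measurableT A mA; rewrite setTI. Qed.

Section Atom.
Context (R : realType) (d : measure_display) (Omega : measurableType d)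
  (P : probability Omega R) (mu : probability cube R) (n : nat)
  (X : 'I_n -> Omega -> cube) (hX : iid_sample P mu X).
Context (T : finType) (f : cube -> T) (hf : forall t, measurable (f @^-1` [set t])).

Definition wt (t : T) : R := fine (mu (f @^-1` [set t])).

Lemma wt_ge0 t : 0 <= wt t.
Proof. by apply: fine_ge0; apply: measure_ge0. Qed.

Lemma wtE t : (wt t)%:E = mu (f @^-1` [set t]).
Proof. by rewrite fineK // fin_num_measure. Qed.

Definition atom (b : {ffun 'I_n -> T}) : set Omega := [set w | [ffun k => f (X k w)] = b].

Lemma atomE b : atom b = \bigcap_(k in [set: 'I_n]) (X k @^-1` (f @^-1` [set b k])).
Proof.
apply/seteqP; split => w /=.
  by move=> <- k _ /=; rewrite ffunE.
by move=> h; apply/ffunP => k; rewrite ffunE; exact: (h k I).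
Qed.

Lemma atom_meas b : measurable (atom b).
Proof.
rewrite atomE; apply: fin_bigcap_measurable; first exact: finite_finset.
by move=> k _; apply: (iid_pre hX).
Qed.

Lemma atom_prob b : P (atom b) = (W wt b)%:E.
Proof.
rewrite atomE hX.2.2; last by move=> k; apply: hf.
rewrite /W -prodEFin; apply: eq_bigr => k _.
by rewrite wtE hX.2.1.
Qed.

Lemma event_setE (Phi : pred {ffun 'I_n -> T}) :
  [set w | Phi [ffun k => f (X k w)]] =
  \big[setU/set0]_(b <- index_enum {ffun 'I_n -> T} | Phi b) atom b.
Proof.
apply/seteqP; split => w /=.
  by move=> h; apply/mem_bigsetU_seq; exists [ffun k => f (X k w)]; rewrite mem_index_enum.
by move=> /mem_bigsetU_seq [b [_ [pb hb]]]; rewrite /atom /= in hb; rewrite hb.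
Qed.

Lemma event_meas (Phi : pred {ffun 'I_n -> T}) :
  measurable [set w | Phi [ffun k => f (X k w)]].
Proof. by rewrite event_setE; apply: bigsetU_measurable => b _; apply: atom_meas. Qed.

Lemma event_prob (Phi : pred {ffun 'I_n -> T}) :
  P [set w | Phi [ffun k => f (X k w)]] = (\sum_(b | Phi b) W wt b)%:E.
Proof.
rewrite event_setE measure_bigsetU_seq //.
- by rewrite -sumEFin; apply: eq_bigr => b _; exact: atom_prob.
- exact: index_enum_uniq.
- exact: atom_meas.
move=> b b' bb'; apply/seteqP; split => // w [/= h1 h2].
by move: bb'; rewrite -h1 -h2 eqxx.
Qed.

End Atom.

Lemma wt_sum (R : realType) (mu : probability cube R) (T : finType) (f : cube -> T)
  (hf : forall t, measurable (f @^-1` [set t])) : \sum_t wt mu f t = 1.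
Proof.
apply: EFin_inj; rewrite -sumEFin.
rewrite (eq_bigr (fun t => mu (f @^-1` [set t]))); last by move=> t _; rewrite wtE.
rewrite -(measure_bigsetU_seq mu xpredT (index_enum_uniq T)) //.
  rewrite -(probability_setT mu); congr (mu _).
  apply/seteqP; split=> // x _; apply/mem_bigsetU_seq; exists (f x).
  by rewrite mem_index_enum.
move=> t t' tt'; apply/seteqP; split => // x [/= h1 h2].
by move: tt'; rewrite -h1 -h2 eqxx.
Qed.

Lemma cyl_meas (j : nat) (B : set bool) : measurable [set x : cube | B (x j)].
Proof. by apply: sub_sigma_algebra; exists j, B. Qed.

Definition fc (j : nat) (x : cube) : bool := x j.
Definition fJ (J : nat) (x : cube) : {ffun 'I_J -> bool} := [ffun j : 'I_J => x j].
Definition fp (i j : nat) (x : cube) : bool * bool := (x i, x j).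

Lemma fc_meas j t : measurable (fc j @^-1` [set t]).
Proof. exact: cyl_meas. Qed.

Lemma fJ_meas J t : measurable (fJ J @^-1` [set t]).
Proof.
have -> : fJ J @^-1` [set t] = \bigcap_(j in [set: 'I_J]) [set x : cube | [set t j] (x j)].
  apply/seteqP; split => x /=.
    by move=> <- j _ /=; rewrite ffunE.
  by move=> h; apply/ffunP => j; rewrite ffunE; exact: (h j I).
apply: fin_bigcap_measurable; first exact: finite_finset.
by move=> j _; apply: cyl_meas.
Qed.

Lemma fp_meas i j t : measurable (fp i j @^-1` [set t]).
Proof.
have -> : fp i j @^-1` [set t] = [set x : cube | [set t.1] (x i)] `&` [set x : cube | [set t.2] (x j)].
  case: t => a b; apply/seteqP; split => x; rewrite /fp /=.
    by move=> [-> ->].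
  by move=> [-> ->].
by apply: measurableI; apply: cyl_meas.
Qed.

Definition cntf (R : realType) n (T : finType) (g : T -> bool) (b : {ffun 'I_n -> T}) : R :=
  \sum_(k < n) (g (b k))%:R.

Lemma cntf_ffun (R : realType) n (T : finType) (g : T -> bool) (h : 'I_n -> T) :
  cntf R g [ffun k => h k] = \sum_(k < n) (g (h k))%:R.
Proof. by apply: eq_bigr => k _; rewrite ffunE. Qed.

Lemma coord_meanE (R : realType) (nu : probability cube R) j :
  coord_mean nu j = nu (fc j @^-1` [set true]).
Proof.
rewrite /coord_mean.
transitivity (\int[nu]_(x in setT) (\1_(fc j @^-1` [set true]) x)%:E)%E.
  apply: eq_integral => x _; rewrite indicE.
  by case: (boolP (x j)) => h; [rewrite mem_set | rewrite memNset] => //=; apply/negP.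
by rewrite integral_indic // ?setIT //; apply: fc_meas.
Qed.

Section Side.
Context (R : realType) (d : measure_display) (Omega : measurableType d)
  (P : probability Omega R) (nu : probability cube R) (n : nat)
  (X : 'I_n -> Omega -> cube) (hX : iid_sample P nu X) (n0 : (0 < n)%N).

Definition am (w : Omega) (j : nat) : R := n%:R^-1 * \sum_(i < n) ((X i w j)%:R : R).
Definition cmn (j : nat) : R := fine (coord_mean nu j).
Definition mdv (w : Omega) (j : nat) : R := `|am w j - cmn j|.
Definition md (w : Omega) : \bar R := max_dev nu (fun i => X i w).
Definition mm (w : Omega) : R := fine (md w).

Lemma cmnE j : (cmn j)%:E = coord_mean nu j.
Proof. by rewrite /cmn coord_meanE fineK //; apply: fin_num_measure; apply: fc_meas. Qed.

Lemma cmn01 j : 0 <= cmn j <= 1.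
Proof.
have := cmnE j; rewrite coord_meanE => h.
rewrite -!lee_fin h measure_ge0 /=.
by apply: probability_le1; apply: fc_meas.
Qed.

Lemma am01 w j : 0 <= am w j <= 1.
Proof.
have np : (0 < n%:R :> R) by rewrite ltr0n.
rewrite /am; apply/andP; split.
  by apply: mulr_ge0; [rewrite invr_ge0 ltW | apply: sumr_ge0 => i _].
rewrite ler_pdivrMl // mulr1.
apply: (@le_trans _ _ (\sum_(i < n) (1 : R))).
  by apply: ler_sum => i _; case: (X i w j).
by rewrite sumr_const card_ord.
Qed.

Lemma mdv01 w j : 0 <= mdv w j <= 1.
Proof.
have := am01 w j; have := cmn01 j; rewrite /mdv => /andP [c0 c1] /andP [a0 a1].
rewrite normr_ge0 /=; rewrite ler_norml; apply/andP; split; lra.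
Qed.

Lemma mdE w : md w = ereal_sup (range (fun j => (mdv w j)%:E)).
Proof.
rewrite /md /max_dev; congr ereal_sup; apply/seteqP; split => _ [j _ <-]; exists j => //.
  by rewrite -cmnE -EFinB abse_EFin.
by rewrite -cmnE -EFinB abse_EFin.
Qed.

Lemma md01 w : (0 <= md w)%E /\ (md w <= 1)%E.
Proof.
rewrite mdE; split.
  apply: (@le_trans _ _ (mdv w 0)%:E); first by rewrite lee_fin; case/andP: (mdv01 w 0).
  by apply: ereal_sup_ubound; exists 0%N.
by apply: ge_ereal_sup => _ [j _ <-]; rewrite lee_fin; case/andP: (mdv01 w j).
Qed.

Lemma mmE w : md w = (mm w)%:E.
Proof.
have [h0 h1] := md01 w.
by rewrite /mm fineK // ge0_fin_numE // (le_lt_trans h1) // ltry.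
Qed.

Lemma mm_ge0 w : 0 <= mm w.
Proof. by rewrite -lee_fin -mmE; case: (md01 w). Qed.

Lemma mm_gt r w : r < mm w <-> exists j, r < mdv w j.
Proof.
rewrite -lte_fin -mmE mdE; split.
  by move/ereal_sup_gtP => [_ [j _ <-]]; rewrite lte_fin => h; exists j.
by case=> j h; apply/ereal_sup_gtP; exists (mdv w j)%:E => //; exists j.
Qed.

Lemma am_fc j w : am w j = n%:R^-1 * cntf R id [ffun k => fc j (X k w)].
Proof. by rewrite cntf_ffun. Qed.

Lemma mdv_meas r j : measurable [set w | r < mdv w j].
Proof.
have := event_meas hX (fc_meas j)
  (fun b => r < `|n%:R^-1 * cntf R id b - cmn j|).
congr measurable; apply/seteqP; split => w /=; by rewrite /mdv am_fc.
Qed.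

Lemma mm_meas : measurable_fun setT mm.
Proof.
apply: (measurability _ (RGenOInfty.measurableE R)) => //.
move=> _ [_ [x ->] <-].
have -> : setT `&` mm @^-1` `]x, +oo[ = \bigcup_j [set w | x < mdv w j].
  apply/seteqP; split => w /=.
    by move=> [_]; rewrite in_itv /= andbT => /mm_gt [j h]; exists j.
  by move=> [j _ h]; split => //; rewrite in_itv /= andbT; apply/mm_gt; exists j.
by apply: bigcupT_measurable => j; apply: mdv_meas.
Qed.

Definition mmRV : {RV P >-> R} := mfun_Sub (mem_set mm_meas).

Lemma DeltaE : Delta P nu X =
  (\int[lebesgue_measure]_(r in `[0%R, +oo[) ccdf mmRV r)%E.
Proof.
rewrite -ge0_expectation_ccdf; last by move=> w; apply: mm_ge0.
rewrite expectation_def /Delta; apply: eq_integral => w _.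
by rewrite -mmE.
Qed.

Definition Ev (r : R) : set Omega := [set w | exists j, r < mdv w j].

Lemma ccdfE r : ccdf mmRV r = P (Ev r).
Proof.
rewrite /ccdf /distribution /pushforward; congr (P _).
apply/seteqP; split => w /=; rewrite in_itv /= andbT; by move/mm_gt.
Qed.

End Side.

Section Ev.
Context (R : realType) (d : measure_display) (Omega : measurableType d)
  (P : probability Omega R) (nu : probability cube R) (n : nat)
  (X : 'I_n -> Omega -> cube) (hX : iid_sample P nu X).
Context (Q : nat -> R -> bool).

Definition Sc (w : Omega) (j : nat) : R := \sum_(k < n) ((X k w j)%:R : R).
Definition EvQ (j : nat) : set Omega := [set w | Q j (Sc w j)].

Lemma cntf_fJ J (j : 'I_J) w :
  cntf R (fun t : {ffun 'I_J -> bool} => t j) [ffun k => fJ J (X k w)] = Sc w j.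
Proof. by rewrite cntf_ffun; apply: eq_bigr => k _; rewrite /fJ ffunE. Qed.

Lemma evJ J (j : 'I_J) : P (EvQ j) =
  (\sum_(b : {ffun 'I_n -> {ffun 'I_J -> bool}} | Q j (cntf R (fun t : {ffun 'I_J -> bool} => t j) b)) W (wt nu (fJ J)) b)%:E.
Proof.
rewrite -(event_prob hX (@fJ_meas J)); congr (P _); apply/seteqP; split => w /=;
  by rewrite cntf_fJ.
Qed.

Lemma evc j : P (EvQ j) =
  (\sum_(b : {ffun 'I_n -> bool} | Q j (cntf R id b)) W (wt nu (fc j)) b)%:E.
Proof.
rewrite -(event_prob hX (fc_meas j)); congr (P _); apply/seteqP; split => w /=;
  by rewrite cntf_ffun.
Qed.

Lemma evJI J (i j : 'I_J) : P (EvQ i `&` EvQ j) =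
  (\sum_(b : {ffun 'I_n -> {ffun 'I_J -> bool}} | Q i (cntf R (fun t : {ffun 'I_J -> bool} => t i) b) &&
             Q j (cntf R (fun t : {ffun 'I_J -> bool} => t j) b)) W (wt nu (fJ J)) b)%:E.
Proof.
rewrite -(event_prob hX (@fJ_meas J)); congr (P _); apply/seteqP; split => w /=;
  rewrite !cntf_fJ; [by move=> [-> ->] | by move=> /andP].
Qed.

Lemma evJU J : P [set w | exists j : 'I_J, Q j (Sc w j)] =
  (\sum_(b : {ffun 'I_n -> {ffun 'I_J -> bool}} | [exists j : 'I_J, Q j (cntf R (fun t : {ffun 'I_J -> bool} => t j) b)])
     W (wt nu (fJ J)) b)%:E.
Proof.
rewrite -(event_prob hX (@fJ_meas J)); congr (P _); apply/seteqP; split => w /=.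
  by move=> [j h]; apply/existsP; exists j; rewrite cntf_fJ.
by move=> /existsP [j h]; exists j; rewrite -cntf_fJ.
Qed.

Lemma evJU_meas J : measurable [set w | exists j : 'I_J, Q j (Sc w j)].
Proof.
have := event_meas hX (@fJ_meas J)
  (fun b => [exists j : 'I_J, Q j (cntf R (fun t : {ffun 'I_J -> bool} => t j) b)]).
congr measurable; apply/seteqP; split => w /=.
  by move=> /existsP [j h]; exists j; rewrite -cntf_fJ.
by move=> [j h]; apply/existsP; exists j; rewrite cntf_fJ.
Qed.

Lemma evQ_meas j : measurable (EvQ j).
Proof.
have := event_meas hX (fc_meas j) (fun b => Q j (cntf R id b)).
by congr measurable; apply/seteqP; split => w /=; rewrite cntf_ffun.
Qed.

Lemma evp1 i j : P (EvQ i) =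
  (\sum_(b : {ffun 'I_n -> bool * bool} | Q i (cntf R fst b)) W (wt nu (fp i j)) b)%:E.
Proof.
rewrite -(event_prob hX (fp_meas i j)); congr (P _); apply/seteqP; split => w /=;
  by rewrite cntf_ffun.
Qed.

Lemma evp2 i j : P (EvQ j) =
  (\sum_(b : {ffun 'I_n -> bool * bool} | Q j (cntf R snd b)) W (wt nu (fp i j)) b)%:E.
Proof.
rewrite -(event_prob hX (fp_meas i j)); congr (P _); apply/seteqP; split => w /=;
  by rewrite cntf_ffun.
Qed.

Lemma evpI i j : P (EvQ i `&` EvQ j) =
  (\sum_(b : {ffun 'I_n -> bool * bool} | Q i (cntf R fst b) && Q j (cntf R snd b)) W (wt nu (fp i j)) b)%:E.
Proof.
rewrite -(event_prob hX (fp_meas i j)); congr (P _); apply/seteqP; split => w /=;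
  rewrite !cntf_ffun; [by move=> [-> ->] | by move=> /andP].
Qed.

End Ev.

Lemma mulrNN1 (R : realType) : (-1) * (-1) = 1 :> R.
Proof. by rewrite mulrNN mulr1. Qed.

Lemma eqle (R : realType) (x y : R) : x = y -> x <= y.
Proof. by move=> ->. Qed.

Lemma natr_andb (R : realType) (a b : bool) : ((a && b)%:R : R) = a%:R * b%:R.
Proof. by case: a; case: b; rewrite ?mulr1 ?mulr0. Qed.

Lemma qc_lemma (R : realType) (mu : probability cube R) (hnc : neg_correlated mu)
  (i j : nat) (ij : i <> j) :
  wt mu (fp i j) (true,true) <=
  (wt mu (fp i j) (true,false) + wt mu (fp i j) (true,true)) *
  (wt mu (fp i j) (false,true) + wt mu (fp i j) (true,true)).
Proof.
have hf := fp_meas i j.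
have disj a b c e : (a, b) != (c, e) ->
    fp i j @^-1` [set (a, b)] `&` fp i j @^-1` [set (c, e)] = set0.
  move=> ne; apply/seteqP; split => // x [/= h1 h2].
  by move: ne; rewrite -h1 -h2 eqxx.
have e1 : wt mu (fp i j) (true,false) + wt mu (fp i j) (true,true) = cmn mu i.
  apply: EFin_inj; rewrite EFinD !(wtE mu hf) cmnE coord_meanE -measureU //; last exact: disj.
  congr (mu _); apply/seteqP; split => x; rewrite /fp /fc /=.
    by case=> -[-> _].
  by move=> ->; case: (x j); [right|left].
have e2 : wt mu (fp i j) (false,true) + wt mu (fp i j) (true,true) = cmn mu j.
  apply: EFin_inj; rewrite EFinD !(wtE mu hf) cmnE coord_meanE -measureU //; last exact: disj.
  congr (mu _); apply/seteqP; split => x; rewrite /fp /fc /=.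
    by case=> -[_ ->].
  by move=> ->; case: (x i); [right|left].
have e3 : (wt mu (fp i j) (true,true))%:E =
    (\int[mu]_(x in setT) (((x i)%:R * (x j)%:R : R))%:E)%E.
  rewrite (wtE mu hf) -(setIT (fp i j @^-1` _)) -integral_indic //.
  apply: eq_integral => x _; rewrite indicE; congr EFin.
  have -> : (x \in fp i j @^-1` [set (true, true)]) = x i && x j.
    apply/idP/idP.
      by rewrite in_setE /fp /= => -[-> ->].
    by move=> /andP [h1 h2]; rewrite in_setE /fp /= h1 h2.
  exact: natr_andb.
have := hnc i j ij; rewrite -e3 -!cmnE -EFinM lee_fin.
by rewrite e1 e2.
Qed.

Lemma pair_bound (R : realType) d (Omega : measurableType d) (P : probability Omega R)
  (mu : probability cube R) (n : nat) (X : 'I_n -> Omega -> cube)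
  (hX : iid_sample P mu X) (hnc : neg_correlated mu) (Q : nat -> R -> bool) (eps : R)
  (he : eps * eps = 1)
  (hm : forall k, {homo (fun N : nat => eps * (Q k N%:R)%:R) : a b / (a <= b)%N >-> a <= b})
  (i j : nat) (ij : i <> j) :
  fine (P (EvQ X Q i `&` EvQ X Q j)) <= fine (P (EvQ X Q i)) * fine (P (EvQ X Q j)).
Proof.
rewrite (evpI hX) (evp1 hX Q i j) (evp2 hX Q i j) /=.
rewrite [X in X <= _]sum_cond_ind [X in _ <= X * _]sum_cond_ind [X in _ <= _ * X]sum_cond_ind.
have cntE1 (b : {ffun 'I_n -> bool * bool}) :
  cntf R fst b = (\sum_(k < n) ((b k).1 : nat))%:R by rewrite natr_sum.
have cntE2 (b : {ffun 'I_n -> bool * bool}) :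
  cntf R snd b = (\sum_(k < n) ((b k).2 : nat))%:R by rewrite natr_sum.
have := NA (fun t => wt_ge0 mu (fp i j) t) (wt_sum mu (fp_meas i j)) (qc_lemma hnc ij) n
  (hm i) (hm j).
rewrite /=.
have E1 (A B : R) : eps * A * (eps * B) = A * B.
  by rewrite mulrACA he mul1r.
under eq_bigr => b _ do rewrite E1.
under [X in _ <= X * _ -> _]eq_bigr => b _ do rewrite mulrCA.
under [X in _ <= _ * X -> _]eq_bigr => b _ do rewrite mulrCA.
rewrite -!mulr_sumr E1 => H.
apply: le_trans (le_trans H _) => //.
  by apply: eqle; apply: eq_bigr => b _; rewrite natr_andb cntE1 cntE2.
by apply: eqle; congr (_ * _); apply: eq_bigr => b _; rewrite ?cntE1 ?cntE2.
Qed.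

Section Main.
Context (R : realType) (mu mut : probability cube R)
  (d1 : measure_display) (Omega1 : measurableType d1) (P1 : probability Omega1 R)
  (d2 : measure_display) (Omega2 : measurableType d2) (P2 : probability Omega2 R)
  (n : nat) (X : 'I_n -> Omega1 -> cube) (Y : 'I_n -> Omega2 -> cube)
  (hnc : neg_correlated mu) (hpv : product_version mu mut) (n0 : (0 < n)%N)
  (hX : iid_sample P1 mu X) (hY : iid_sample P2 mut Y).

Lemma wt_fc_eq j t : wt mut (fc j) t = wt mu (fc j) t.
Proof. by rewrite /wt; congr fine; exact: hpv.2 j [set t]. Qed.

Lemma cmn_eq j : cmn mut j = cmn mu j.
Proof. by rewrite /cmn !coord_meanE; congr fine; exact: hpv.2 j [set true]. Qed.

Definition Qu (r : R) (j : nat) (N : R) : bool := r < n%:R^-1 * N - cmn mu j.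
Definition Qd (r : R) (j : nat) (N : R) : bool := n%:R^-1 * N - cmn mu j < - r.
Definition Qa (r : R) (j : nat) (N : R) : bool := Qu r j N || Qd r j N.

Lemma Ev_eq1 r : Ev mu X r = [set w | exists j, Qa r j (Sc R X w j)].
Proof.
apply/seteqP; split => w [j h]; exists j; move: h;
  by rewrite /mdv /am /Qa /Qu /Qd ltr_normr (ltrNr r).
Qed.

Lemma Ev_eq2 r : Ev mut Y r = [set w | exists j, Qa r j (Sc R Y w j)].
Proof.
apply/seteqP; split => w [j h]; exists j; move: h;
  by rewrite /mdv /am /Qa /Qu /Qd ltr_normr (ltrNr r) cmn_eq.
Qed.

Lemma margJ (Q : nat -> R -> bool) J (j : 'I_J) :
  \sum_(b : {ffun 'I_n -> {ffun 'I_J -> bool}} | Q j (cntf R (fun t : {ffun 'I_J -> bool} => t j) b))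
     W (wt mut (fJ J)) b =
  \sum_(b : {ffun 'I_n -> {ffun 'I_J -> bool}} | Q j (cntf R (fun t : {ffun 'I_J -> bool} => t j) b))
     W (wt mu (fJ J)) b.
Proof.
apply: EFin_inj; rewrite -(evJ hY Q j) -(evJ hX Q j) (evc hY Q j) (evc hX Q j).
congr EFin; apply: eq_bigr => b _; apply: eq_bigr => k _; exact: wt_fc_eq.
Qed.

Lemma Qu_mono r k :
  {homo (fun N : nat => 1 * (Qu r k N%:R)%:R : R) : a b / (a <= b)%N >-> a <= b}.
Proof.
move=> a b ab /=; rewrite !mul1r.
case: (boolP (Qu r k a%:R)) => h; last by rewrite ler0n.
suff -> : Qu r k b%:R by [].
move: h; rewrite /Qu => h; apply: (lt_le_trans h); rewrite lerD2r.
by apply: ler_wpM2l; [rewrite invr_ge0 ler0n | rewrite ler_nat].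
Qed.

Lemma Qd_mono r k :
  {homo (fun N : nat => -1 * (Qd r k N%:R)%:R : R) : a b / (a <= b)%N >-> a <= b}.
Proof.
move=> a b ab /=; rewrite !mulN1r lerN2.
case: (boolP (Qd r k b%:R)) => h; last by rewrite ler0n.
suff -> : Qd r k a%:R by [].
move: h; rewrite /Qd => h; apply: (le_lt_trans _ h); rewrite lerD2r.
by apply: ler_wpM2l; [rewrite invr_ge0 ler0n | rewrite ler_nat].
Qed.

Lemma lowQ (Q : nat -> R -> bool) (eps : R) (he : eps * eps = 1)
  (hm : forall k, {homo (fun N : nat => eps * (Q k N%:R)%:R) : a b / (a <= b)%N >-> a <= b})
  J :
  (\sum_(j < J) \sum_(b : {ffun 'I_n -> {ffun 'I_J -> bool}})
      W (wt mu (fJ J)) b * (Q j (cntf R (fun t : {ffun 'I_J -> bool} => t j) b))%:R) /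
  (1 + \sum_(j < J) \sum_(b : {ffun 'I_n -> {ffun 'I_J -> bool}})
      W (wt mu (fJ J)) b * (Q j (cntf R (fun t : {ffun 'I_J -> bool} => t j) b))%:R)
  <= fine (P1 [set w | exists j : 'I_J, Q j (Sc R X w j)]).
Proof.
rewrite (evJU hX Q J) /= [X in _ <= X]sum_cond_ind.
apply: (@CE R _ _ (fun b => W_ge0 b (fun t => wt_ge0 mu (fJ J) t)) J
   (fun (j : 'I_J) (b : {ffun 'I_n -> {ffun 'I_J -> bool}}) =>
   Q j (cntf R (fun t : {ffun 'I_J -> bool} => t j) b))).
move=> i j ij.
have ij' : (i : nat) <> j.
  by move=> e; move: ij; rewrite -(inj_eq val_inj) /= e eqxx.
have := pair_bound hX hnc he hm ij'.
rewrite (evJI hX Q i j) (evJ hX Q i) (evJ hX Q j) /=.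
move=> H; under eq_bigr do rewrite -natr_andb.
by rewrite -!sum_cond_ind.
Qed.

Lemma T1_meas r : measurable [set w | exists j, Qa r j (Sc R X w j)].
Proof.
have -> : [set w | exists j, Qa r j (Sc R X w j)] = \bigcup_j EvQ X (Qa r) j.
  apply/seteqP; split => w; first by move=> [j h]; exists j.
  by move=> [j _ h]; exists j.
by apply: bigcupT_measurable => j; exact: (evQ_meas hX).
Qed.

Lemma Jbound r J :
  (P2 [set w | exists j : 'I_J, Qa r j (Sc R Y w j)] <=
   4%:E * P1 [set w | exists j, Qa r j (Sc R X w j)])%E.
Proof.
set T1 := [set w | exists j, Qa r j (Sc R X w j)].
set y := fine (P1 T1).
have hy : P1 T1 = y%:E by rewrite fineK //; apply: fin_num_measure; apply: T1_meas.
have sub (Q : nat -> R -> bool) (hQ : forall j N, Q j N -> Qa r j N) :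
    fine (P1 [set w | exists j : 'I_J, Q j (Sc R X w j)]) <= y.
  rewrite -lee_fin -hy fineK; last by apply: fin_num_measure; exact: (evJU_meas hX).
  apply: le_measure; rewrite ?inE; [exact: (evJU_meas hX) | exact: T1_meas |].
  by move=> w [j h]; exists j; apply: hQ.
have lowU := le_trans (lowQ (mulr1 1) (Qu_mono r) J)
  (sub (Qu r) (fun j N h => introT orP (or_introl h))).
have lowD := le_trans (lowQ (mulrNN1 R) (Qd_mono r) J)
  (sub (Qd r) (fun j N h => introT orP (or_intror h))).
rewrite (evJU hY (Qa r) J).
rewrite hy -EFinM lee_fin.
set W2 := wt mut (fJ J).
have x1 : \sum_(b : {ffun 'I_n -> {ffun 'I_J -> bool}} |
     [exists j : 'I_J, Qa r j (cntf R (fun t : {ffun 'I_J -> bool} => t j) b)]) W W2 b <= 1.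
  rewrite -lee_fin -(evJU hY (Qa r) J); apply: probability_le1; exact: (evJU_meas hY).
apply: (final_alg _ _ x1 _ lowU lowD).
- by apply: sumr_ge0 => j _; apply: sumr_ge0 => b _; apply: mulr_ge0 => //;
    apply: W_ge0 => t; apply: wt_ge0.
- by apply: sumr_ge0 => j _; apply: sumr_ge0 => b _; apply: mulr_ge0 => //;
    apply: W_ge0 => t; apply: wt_ge0.
rewrite [X in X <= _]sum_cond_ind.
apply: le_trans (union_bound (fun b => W_ge0 b (fun t => wt_ge0 mut (fJ J) t))
   (fun (j : 'I_J) (b : {ffun 'I_n -> {ffun 'I_J -> bool}}) =>
      Qu r j (cntf R (fun t : {ffun 'I_J -> bool} => t j) b))
   (fun (j : 'I_J) (b : {ffun 'I_n -> {ffun 'I_J -> bool}}) =>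
      Qd r j (cntf R (fun t : {ffun 'I_J -> bool} => t j) b))) _.
rewrite -big_split /=; apply: eqle; apply: eq_bigr => j _.
by rewrite -!sum_cond_ind !margJ.
Qed.

End Main.


Lemma pointwise (R : realType) (mu mut : probability cube R)
  (d1 : measure_display) (Omega1 : measurableType d1) (P1 : probability Omega1 R)
  (d2 : measure_display) (Omega2 : measurableType d2) (P2 : probability Omega2 R)
  (n : nat) (X : 'I_n -> Omega1 -> cube) (Y : 'I_n -> Omega2 -> cube)
  (hnc : neg_correlated mu) (hpv : product_version mu mut) (n0 : (0 < n)%N)
  (hX : iid_sample P1 mu X) (hY : iid_sample P2 mut Y) (r : R) :
  (P2 (Ev mut Y r) <= 4%:E * P1 (Ev mu X r))%E.
Proof.
rewrite (Ev_eq1 mu X r) (Ev_eq2 Y hpv r).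
set FJ := fun J : nat => [set w | exists j : 'I_J, Qa mu n r j (Sc R Y w j)].
have U : [set w | exists j, Qa mu n r j (Sc R Y w j)] = \bigcup_J FJ J.
  apply/seteqP; split => w.
    by move=> [j h]; exists j.+1 => //; exists (Ordinal (ltnSn j)).
  by move=> [J _ [j h]]; exists j.
have mF J : measurable (FJ J) := evJU_meas hY (Qa mu n r) J.
have nd : nondecreasing_seq FJ.
  by move=> a b ab; rewrite subsetEset => w [j h]; exists (widen_ord ab j).
have cv := @nondecreasing_cvg_mu _ _ _ P2 FJ mF (bigcupT_measurable _ mF) nd.
rewrite U -(cvg_lim (@ereal_hausdorff R) cv).
apply: lime_le; first by apply/cvg_ex; eexists; exact: cv.
by apply: nearW => J; apply: (Jbound hnc hpv hX hY).
Qed.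

Unset Implicit Arguments.

Theorem theorem1 (R : realType) (mu mut : probability cube R)
  (d1 : measure_display) (Omega1 : measurableType d1) (P1 : probability Omega1 R)
  (d2 : measure_display) (Omega2 : measurableType d2) (P2 : probability Omega2 R)
  (n : nat) (X : 'I_n -> Omega1 -> cube) (Y : 'I_n -> Omega2 -> cube) :
  neg_correlated mu ->
  product_version mu mut ->
  (0 < n)%N ->
  iid_sample P1 mu X ->
  iid_sample P2 mut Y ->
  (4^-1%:E * Delta P2 mut Y <= Delta P1 mu X)%E.
Proof.
move=> hnc hpv n0 hX hY.
rewrite (DeltaE hX n0) (DeltaE hY n0).
rewrite -ge0_integralZl_EFin //; last exact: measurable_funTS (ccdf_measurable _).
apply: ge0_le_integral => //.
- by move=> r _; apply: mule_ge0 => //; rewrite lee_fin invr_ge0.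
- by apply: measurable_funeM; exact: measurable_funTS (ccdf_measurable _).
- exact: measurable_funTS (ccdf_measurable _).
move=> r _; rewrite !ccdfE.
have h := pointwise hnc hpv n0 hX hY r.
apply: le_trans (lee_wpmul2l _ h) _; first by rewrite lee_fin invr_ge0.
by rewrite muleA -EFinM mulVf // mul1e.
Qed.
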